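(* The functor $A\mapsto A_{halo}$ induces an equivalence of categories between the category of idempotent semirings whose natural order is total (with semiring morphisms) and the category of tropical halos with multiplicative halo morphisms.
   Context: Semirings are commutative and unital. A halo is a semiring with a partial order compatible with its operations ($x\le z,y\le t\Rightarrow xy\le zt,\ x+y\le z+t$); a halo morphism is an increasing map $f$ with $f(0)=0$, $f(1)=1$, $f(a+b)\le f(a)+f(b)$, $f(ab)\le f(a)f(b)$; it is multiplicative if $f(ab)=f(a)f(b)$. A semiring is idempotent if $a+a=a$ for all $a$; its natural order is $a\le b\iff a+b=b$, and $A_{halo}$ denotes $A$ with this order. A halo is tropical if it is not $\{0\}$, its order is total, and $a+b=\max(a,b)$ for all $a,b$. *)

(* Defs.v *)
From HB Require Import structures.
From mathcomp Require Import all_boot all_order all_algebra.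
Set Implicit Arguments. Unset Strict Implicit. Unset Printing Implicit Defensive.
Import GRing.Theory.
Local Open Scope ring_scope.

(* Semirings: commutative unital semirings = mathcomp comPzSemiRingType
   (0 = 1 allowed at the level of the type class). *)

Definition is_halo (R : comPzSemiRingType) (le : rel R) : Prop :=
  [/\ (forall x, le x x),
      (forall x y, le x y -> le y x -> x = y),
      (forall x y z, le x y -> le y z -> le x z),
      (forall x y z t, le x z -> le y t -> le (x * y) (z * t)) &
      (forall x y z t, le x z -> le y t -> le (x + y) (z + t))].

Definition halo_morphism (R S : comPzSemiRingType) (leR : rel R) (leS : rel S)
    (f : R -> S) : Prop :=
  [/\ (forall x y, leR x y -> leS (f x) (f y)),
      f 0 = 0, f 1 = 1,
      (forall a b, leS (f (a + b)) (f a + f b)) &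
      (forall a b, leS (f (a * b)) (f a * f b))].

Definition multiplicative_map (R S : comPzSemiRingType) (f : R -> S) : Prop :=
  forall a b, f (a * b) = f a * f b.

Definition multiplicative_halo_morphism (R S : comPzSemiRingType)
    (leR : rel R) (leS : rel S) (f : R -> S) : Prop :=
  halo_morphism leR leS f /\ multiplicative_map f.

Definition semiring_morphism (R S : comPzSemiRingType) (f : R -> S) : Prop :=
  [/\ f 0 = 0, f 1 = 1,
      (forall a b, f (a + b) = f a + f b) &
      (forall a b, f (a * b) = f a * f b)].

Definition idempotent_semiring (R : comPzSemiRingType) : Prop :=
  forall a : R, a + a = a.

(* Natural order a <= b iff a + b = b; A_halo is A with this order. *)
Definition nat_le (R : comPzSemiRingType) : rel R := fun a b => a + b == b.

Definition total_rel (T : Type) (le : rel T) : Prop :=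
  forall a b, le a b || le b a.

Definition nonzero_carrier (R : comPzSemiRingType) : Prop :=
  exists x : R, x != 0.

Definition idem_total_semiring (R : comPzSemiRingType) : Prop :=
  [/\ nonzero_carrier R, idempotent_semiring R & total_rel (@nat_le R)].

Definition tropical_halo (R : comPzSemiRingType) (le : rel R) : Prop :=
  [/\ is_halo le, nonzero_carrier R, total_rel le &
      (forall a b : R, a + b = (if le a b then b else a))].

(* Main.v *)
Require Import Defs.
From HB Require Import structures.
From mathcomp Require Import all_boot all_order all_algebra.
Local Open Scope ring_scope.
Import GRing.Theory.

Section Aux.
Variable A : comPzSemiRingType.
Hypothesis idA : idempotent_semiring A.

Lemma nl_refl (x : A) : nat_le x x.
Proof. by rewrite /nat_le idA. Qed.

Lemma nl_antisym (x y : A) : nat_le x y -> nat_le y x -> x = y.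
Proof. by rewrite /nat_le => /eqP h1 /eqP h2; rewrite -h1 -{1}h2 addrC. Qed.

Lemma nl_trans (x y z : A) : nat_le x y -> nat_le y z -> nat_le x z.
Proof.
by rewrite /nat_le => /eqP h1 /eqP h2; apply/eqP; rewrite -h2 addrA h1.
Qed.

Lemma nl_add (x y z t : A) : nat_le x z -> nat_le y t -> nat_le (x + y) (z + t).
Proof.
rewrite /nat_le => /eqP h1 /eqP h2; apply/eqP.
by rewrite addrACA h1 h2.
Qed.

Lemma nl_mul (x y z t : A) : nat_le x z -> nat_le y t -> nat_le (x * y) (z * t).
Proof.
rewrite /nat_le => /eqP h1 /eqP h2; apply/eqP.
rewrite -h1 -h2 !mulrDl !mulrDr !addrA idA //.
Qed.

Lemma nl_addl (a b : A) : nat_le a (a + b).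
Proof. by rewrite /nat_le addrA idA. Qed.

Lemma nl_addr (a b : A) : nat_le b (a + b).
Proof. by rewrite addrC nl_addl. Qed.

Lemma nl_sup (x y z : A) : nat_le x z -> nat_le y z -> nat_le (x + y) z.
Proof. by move=> h1 h2; rewrite -(idA z); apply: nl_add. Qed.

End Aux.

Theorem lemma1p21 :
  (forall A : comPzSemiRingType,
      idem_total_semiring A -> tropical_halo (@nat_le A))
  /\
  (forall (A B : comPzSemiRingType) (f : A -> B),
      idem_total_semiring A -> idem_total_semiring B ->
      (semiring_morphism f <->
       multiplicative_halo_morphism (@nat_le A) (@nat_le B) f))
  /\
  (forall (H : comPzSemiRingType) (le : rel H),
      tropical_halo le ->
      exists (A : comPzSemiRingType) (f : A -> H) (g : H -> A),
        [/\ idem_total_semiring A,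
            multiplicative_halo_morphism (@nat_le A) le f,
            multiplicative_halo_morphism le (@nat_le A) g,
            (forall x, g (f x) = x) &
            (forall y, f (g y) = y)]).
Proof.
split; [|split].
- move=> A [nz idA tot]; split => //.
  + split; [exact: nl_refl|exact: nl_antisym|exact: nl_trans|exact: nl_mul|exact: nl_add].
  + move=> a b; case: ifP => [/eqP //|h].
    by move: (tot a b); rewrite h /= /nat_le addrC => /eqP.
- move=> A B f [_ idA totA] [_ idB totB]; split.
  + case=> f0 f1 fD fM; split => //; split => //.
    * by move=> x y /eqP h; rewrite /nat_le -fD h.
    * by move=> a b; rewrite fD nl_refl.
    * by move=> a b; rewrite fM nl_refl.
  + case=> -[fmon f0 f1 fD _] fM; split => //.
    move=> a b; apply: nl_antisym; [exact: fD|].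
    by apply: nl_sup => //; apply: fmon; [apply: nl_addl|apply: nl_addr].
- move=> H le [[lrefl lanti ltrans lmul ladd] nz tot hadd].
  have idH : idempotent_semiring H by move=> a; rewrite hadd; case: ifP.
  have e1 : forall x y, nat_le x y -> le x y.
    move=> x y /eqP; rewrite hadd => e; apply/idPn => E.
    by rewrite (negbTE E) in e; rewrite e lrefl in E.
  have e2 : forall x y, le x y -> nat_le x y.
    by move=> x y h; rewrite /nat_le hadd h.
  exists H, id, id; split => //.
  + split => //; move=> a b; rewrite /nat_le !hadd.
    by have := tot a b; case: (le a b) => /= [_|->]; rewrite eqxx ?orbT.
  + split => //; split => //; move=> *; solve [exact: lrefl | exact: nl_refl | exact: e1 | exact: e2].
Qed.
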